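(* If expressions $e_1$ and $e_2$ are compatible, then for every $\sigma\in\Sigma$ and all $m_1,m_2\in\mathcal W(\Sigma)$, the sum $[\![e_1]\!](\sigma)\cdot m_1+[\![e_2]\!](\sigma)\cdot m_2$ is defined (and is an element of $\mathcal W(\Sigma)$).
   Context: $\mathcal A=\langle U,+,\cdot,\mathbf 0,\mathbf 1\rangle$ is a partial semiring ($+$ commutative, associative, possibly partial, unit $\mathbf 0$; $\cdot$ total, associative, unit $\mathbf 1$; two-sided distributivity; $\mathbf 0$ annihilates), naturally ordered ($u\le v$ iff $\exists w.\,u+w=v$ is a partial order), Scott continuous ($+$ and $\cdot$ preserve suprema of directed sets in each argument), with a top element. Infinite sums are suprema of finite partial sums. $\mathcal W(\Sigma)$: maps $m:\Sigma\to U$ with countable support $\mathrm{supp}(m)=\{\sigma:m(\sigma)\neq\mathbf 0\}$ and defined mass $|m|=\sum_{\sigma\in\mathrm{supp}(m)}m(\sigma)$; $u\cdot m$ and $m_1+m_2$ are pointwise. An expression $e$ is either a test $b$ (a Boolean combination of $\mathsf{true},\mathsf{false}$ and primitive tests $t\subseteq\Sigma$, evaluating to $[\![b]\!](\sigma)\in\{\mathbf 0,\mathbf 1\}$ with $[\![t]\!](\sigma)=\mathbf 1$ iff $\sigma\in t$) or a weight $u\in U$ with $[\![u]\!](\sigma)=u$. Expressions $e_1,e_2$ are compatible if $[\![e_1]\!](\sigma)+[\![e_2]\!](\sigma)$ is defined for every $\sigma\in\Sigma$. *)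

(* Defs.v *)
From Stdlib Require Import List.
Import ListNotations.
Set Implicit Arguments.

Definition obind {A B : Type} (o : option A) (f : A -> option B) : option B :=
  match o with Some a => f a | None => None end.

Record psemiring (U : Type) := PSemiring {
  padd : U -> U -> option U;
  pmul : U -> U -> U;
  pzero : U;
  pone : U;
  padd_comm : forall a b, padd a b = padd b a;
  (* (a+b)+c defined iff a+(b+c) defined, and then they are equal *)
  padd_assoc : forall a b c,
    obind (padd a b) (fun x => padd x c) = obind (padd b c) (fun y => padd a y);
  padd_0 : forall a, padd pzero a = Some a;
  pmul_assoc : forall a b c, pmul a (pmul b c) = pmul (pmul a b) c;
  pmul_1l : forall a, pmul pone a = a;
  pmul_1r : forall a, pmul a pone = a;
  pmul_addr : forall u a b c, padd a b = Some c ->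
    padd (pmul u a) (pmul u b) = Some (pmul u c);
  pmul_addl : forall u a b c, padd a b = Some c ->
    padd (pmul a u) (pmul b u) = Some (pmul c u);
  pmul_0l : forall a, pmul pzero a = pzero;
  pmul_0r : forall a, pmul a pzero = pzero
}.

Section Order.
Variables (U : Type) (A : psemiring U).

Definition ple (u v : U) : Prop := exists w, padd A u w = Some v.

Definition is_sup (P : U -> Prop) (s : U) : Prop :=
  (forall x, P x -> ple x s) /\ (forall y, (forall x, P x -> ple x y) -> ple s y).

Definition directed (D : U -> Prop) : Prop :=
  (exists x, D x) /\
  (forall x y, D x -> D y -> exists z, D z /\ ple x z /\ ple y z).

Definition naturally_ordered : Prop :=
  (* reflexivity and transitivity of ple follow from the axioms;
     we require it to be a partial order *)
  (forall u, ple u u) /\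
  (forall u v w, ple u v -> ple v w -> ple u w) /\
  (forall u v, ple u v -> ple v u -> u = v).

Definition scott_continuous : Prop :=
  (* + preserves directed suprema (in each argument; + is commutative) *)
  (forall (D : U -> Prop) s u v, directed D -> is_sup D s ->
     padd A u s = Some v ->
     is_sup (fun w => exists x, D x /\ padd A u x = Some w) v) /\
  (forall (D : U -> Prop) s u, directed D -> is_sup D s ->
     is_sup (fun w => exists x, D x /\ w = pmul A u x) (pmul A u s)) /\
  (forall (D : U -> Prop) s u, directed D -> is_sup D s ->
     is_sup (fun w => exists x, D x /\ w = pmul A x u) (pmul A s u)).

Definition has_top : Prop := exists t, forall u, ple u t.

Fixpoint fsum (l : list U) : option U :=
  match l with
  | [] => Some (pzero A)
  | x :: l' => obind (fsum l') (fun s => padd A x s)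
  end.

Section W.
Variable Sig : Type.

Definition supp (m : Sig -> U) (s : Sig) : Prop := m s <> pzero A.

Definition countable_supp (m : Sig -> U) : Prop :=
  exists g : Sig -> nat, forall x y, supp m x -> supp m y -> g x = g y -> x = y.

Definition partial_sums (m : Sig -> U) (v : U) : Prop :=
  exists l : list Sig, NoDup l /\ (forall x, In x l -> supp m x) /\
                       fsum (map m l) = Some v.

(** mass is defined: every finite partial sum is defined and they have a
    supremum (the infinite sum) *)
Definition mass_defined (m : Sig -> U) : Prop :=
  (forall l : list Sig, NoDup l -> (forall x, In x l -> supp m x) ->
     exists v, fsum (map m l) = Some v) /\
  exists M, is_sup (partial_sums m) M.

Definition inW (m : Sig -> U) : Prop := countable_supp m /\ mass_defined m.

Inductive test : Type :=
  | TTrue | TFalse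
  | TPrim (t : Sig -> bool)   (* primitive test t ⊆ Σ, by its indicator *)
  | TNot (b : test) | TAnd (b1 b2 : test) | TOr (b1 b2 : test).

Fixpoint test_eval (b : test) (s : Sig) : bool :=
  match b with
  | TTrue => true | TFalse => false
  | TPrim t => t s
  | TNot b => negb (test_eval b s)
  | TAnd b1 b2 => andb (test_eval b1 s) (test_eval b2 s)
  | TOr b1 b2 => orb (test_eval b1 s) (test_eval b2 s)
  end.

Inductive expr : Type :=
  | ETest (b : test)
  | EWeight (u : U).

Definition expr_eval (e : expr) (s : Sig) : U :=
  match e with
  | ETest b => if test_eval b s then pone A else pzero A
  | EWeight u => u
  end.

Definition compatible (e1 e2 : expr) : Prop :=
  forall s, exists v, padd A (expr_eval e1 s) (expr_eval e2 s) = Some v.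

End W.
End Order.

(* Main.v *)
Require Import Defs.
From Stdlib Require Import List Classical ClassicalEpsilon Lia.
Import ListNotations.
Set Implicit Arguments. Unset Strict Implicit.

Lemma assoc1 U (A : psemiring U) a b c x y :
  padd A a b = Some x -> padd A x c = Some y ->
  exists z, padd A b c = Some z /\ padd A a z = Some y.
Proof.
  intros H1 H2. pose proof (padd_assoc A a b c) as H.
  rewrite H1 in H; simpl in H. rewrite H2 in H.
  destruct (padd A b c) eqn:E; simpl in H; [eauto | discriminate].
Qed.

Lemma assoc2 U (A : psemiring U) a b c z y :
  padd A b c = Some z -> padd A a z = Some y ->
  exists x, padd A a b = Some x /\ padd A x c = Some y.
Proof.
  intros H1 H2. pose proof (padd_assoc A a b c) as H.
  rewrite H1 in H; simpl in H. rewrite H2 in H.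
  destruct (padd A a b) eqn:E; simpl in H; [eauto | discriminate].
Qed.

Lemma swap4 U (A : psemiring U) a b c d p q y :
  padd A a b = Some p -> padd A c d = Some q -> padd A p q = Some y ->
  exists j k, padd A a c = Some j /\ padd A b d = Some k /\ padd A j k = Some y.
Proof.
  intros Hp Hq Hy.
  destruct (assoc1 Hp Hy) as [z [Hz1 Hz2]].
  destruct (assoc2 Hq Hz1) as [w [Hw1 Hw2]].
  rewrite padd_comm in Hw1.
  destruct (assoc1 Hw1 Hw2) as [k [Hk1 Hk2]].
  destruct (assoc2 Hk2 Hz2) as [j [Hj1 Hj2]].
  eauto.
Qed.

Lemma ple_trans U (A : psemiring U) u v x : ple A u v -> ple A v x -> ple A u x.
Proof.
  intros [w Hw] [w' Hw'].
  destruct (assoc1 Hw Hw') as [z [_ Hz]]. exists z; auto.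
Qed.

Lemma ple_refl U (A : psemiring U) u : ple A u u.
Proof. exists (pzero A). rewrite padd_comm. apply padd_0. Qed.

Lemma ple_zero U (A : psemiring U) u : ple A (pzero A) u.
Proof. exists u. apply padd_0. Qed.

Lemma down U (A : psemiring U) u u' v y :
  ple A u u' -> padd A u' v = Some y -> exists z, padd A u v = Some z /\ ple A z y.
Proof.
  intros [w Hw] H.
  destruct (assoc1 Hw H) as [z' [Hz1 Hz2]].
  rewrite padd_comm in Hz1.
  destruct (assoc2 Hz1 Hz2) as [x [Hx1 Hx2]].
  exists x; split; auto. exists w; auto.
Qed.

Lemma mono U (A : psemiring U) u u' v v' y :
  ple A u u' -> ple A v v' -> padd A u' v' = Some y ->
  exists z, padd A u v = Some z /\ ple A z y.
Proof.
  intros Hu Hv H.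
  destruct (down Hu H) as [z1 [H1 L1]].
  rewrite padd_comm in H1.
  destruct (down Hv H1) as [z [H2 L2]].
  exists z; split. rewrite padd_comm; auto. eapply ple_trans; eauto.
Qed.

Lemma ple_mull U (A : psemiring U) a x y : ple A x y -> ple A (pmul A a x) (pmul A a y).
Proof. intros [w Hw]. exists (pmul A a w). apply pmul_addr; auto. Qed.

Lemma top_def U (A : psemiring U) (HT : has_top A) a b c x y :
  padd A a b = Some c -> exists z, padd A (pmul A a x) (pmul A b y) = Some z.
Proof.
  intros Hc. destruct HT as [T HT].
  pose proof (pmul_addl A T a b Hc) as H.
  destruct (mono (ple_mull a (HT x)) (ple_mull b (HT y)) H) as [z [Hz _]]. eauto.
Qed.

Lemma fsum_scale U (A : psemiring U) Sig (f : Sig -> U) a :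
  forall l S, fsum A (map f l) = Some S ->
  fsum A (map (fun t => pmul A a (f t)) l) = Some (pmul A a S).
Proof.
  induction l as [|x r IH]; intros S H; simpl in *.
  - injection H as <-. rewrite pmul_0r. reflexivity.
  - destruct (fsum A (map f r)) as [u|] eqn:E; simpl in H; [|discriminate].
    rewrite (IH u eq_refl). simpl. apply pmul_addr; auto.
Qed.

Lemma fsum_add U (A : psemiring U) Sig (f g h : Sig -> U) :
  (forall t, padd A (g t) (h t) = Some (f t)) ->
  forall l G H S, fsum A (map g l) = Some G -> fsum A (map h l) = Some H ->
  padd A G H = Some S -> fsum A (map f l) = Some S.
Proof.
  intros Hf. induction l as [|x r IH]; intros G H S HG HH HS; simpl in *.
  - injection HG as <-. injection HH as <-. rewrite padd_0 in HS. exact HS.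
  - destruct (fsum A (map g r)) as [G'|] eqn:EG; simpl in HG; [|discriminate].
    destruct (fsum A (map h r)) as [H'|] eqn:EH; simpl in HH; [|discriminate].
    assert (L1 : ple A G' G) by (exists (g x); rewrite padd_comm; auto).
    assert (L2 : ple A H' H) by (exists (h x); rewrite padd_comm; auto).
    destruct (mono L1 L2 HS) as [S' [HS' _]].
    rewrite (IH G' H' S' eq_refl eq_refl HS'). simpl.
    destruct (swap4 HG HH HS) as [j [k [Hj [Hk Hjk]]]].
    rewrite Hf in Hj. injection Hj as <-. rewrite HS' in Hk. injection Hk as <-.
    exact Hjk.
Qed.

Lemma fsum_filter U (A : psemiring U) Sig (m : Sig -> U) :
  forall l, NoDup l -> exists l', NoDup l' /\ (forall x, In x l' -> supp A m x) /\
    (forall x, In x l' -> In x l) /\ fsum A (map m l') = fsum A (map m l).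
Proof.
  induction l as [|x r IH]; intros Hl.
  - exists []. repeat split; auto; intros x [].
  - apply NoDup_cons_iff in Hl as [Hx Hr].
    destruct (IH Hr) as [r' [N' [S' [I' F']]]].
    destruct (classic (supp A m x)) as [Hs|Hs].
    + exists (x :: r'). repeat split.
      * constructor; auto.
      * intros y [<-|Hy]; auto.
      * intros y [<-|Hy]; simpl; auto.
      * simpl. rewrite F'. reflexivity.
    + exists r'. repeat split; auto.
      * intros y Hy; simpl; auto.
      * unfold supp in Hs. apply NNPP in Hs. simpl. rewrite Hs, F'.
        destruct (fsum A (map m r)); simpl; try rewrite padd_0; reflexivity.
Qed.

Lemma dedup Sig : forall l : list Sig, exists l', NoDup l' /\ forall x, In x l -> In x l'.
Proof.
  induction l as [|x r IH].
  - exists []. split; [constructor | intros _ []].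
  - destruct IH as [r' [N I]]. destruct (classic (In x r')) as [H|H].
    + exists r'. split; auto. intros y [<-|Hy]; auto.
    + exists (x :: r'). split; [constructor; auto|]. intros y [<-|Hy]; simpl; auto.
Qed.

Lemma fsum_mid U (A : psemiring U) Sig (f : Sig -> U) x q :
  forall p v, fsum A (map f (p ++ x :: q)) = Some v ->
  exists w, fsum A (map f (p ++ q)) = Some w /\ padd A (f x) w = Some v.
Proof.
  induction p as [|y p' IH]; intros v H; simpl in *.
  - destruct (fsum A (map f q)); simpl in H; eauto; discriminate.
  - destruct (fsum A (map f (p' ++ x :: q))) as [u|] eqn:E; simpl in H; [|discriminate].
    destruct (IH u eq_refl) as [w' [Hw1 Hw2]].
    destruct (assoc2 Hw2 H) as [xx [Hx1 Hx2]].
    rewrite padd_comm in Hx1.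
    destruct (assoc1 Hx1 Hx2) as [z [Hz1 Hz2]].
    exists z. rewrite Hw1. simpl. auto.
Qed.

Lemma fsum_sub U (A : psemiring U) Sig (f : Sig -> U) :
  forall l1 l2 v, NoDup l1 -> NoDup l2 -> (forall x, In x l1 -> In x l2) ->
  fsum A (map f l2) = Some v -> exists u, fsum A (map f l1) = Some u /\ ple A u v.
Proof.
  induction l1 as [|x r IH]; intros l2 v N1 N2 I H.
  - exists (pzero A). split; [reflexivity | apply ple_zero].
  - apply NoDup_cons_iff in N1 as [Hx Hr].
    destruct (in_split x l2 (I x (or_introl eq_refl))) as [p [q ->]].
    destruct (fsum_mid H) as [w [Hw1 Hw2]].
    assert (Ir : forall y, In y r -> In y (p ++ q)).
    { intros y Hy. assert (Hy2 : In y (p ++ x :: q)) by (apply I; simpl; auto).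
      apply in_app_iff in Hy2 as [?|[<-|?]]; apply in_app_iff; auto. contradiction. }
    destruct (IH (p ++ q) w Hr (NoDup_remove_1 _ _ _ N2) Ir Hw1) as [u' [Hu1 Hu2]].
    destruct (mono (ple_refl A (f x)) Hu2 Hw2) as [z [Hz1 Hz2]].
    exists z. simpl. rewrite Hu1. simpl. auto.
Qed.

Lemma partial_in U (A : psemiring U) Sig (m : Sig -> U) :
  mass_defined A m -> forall l, NoDup l ->
  exists S, fsum A (map m l) = Some S /\ partial_sums A m S.
Proof.
  intros [D _] l Hl. destruct (fsum_filter A m Hl) as [l' [N' [S' [_ F']]]].
  destruct (D l' N' S') as [v Hv]. exists v. rewrite <- F'. split; auto.
  exists l'. auto.
Qed.

Lemma directed_ps U (A : psemiring U) Sig (m : Sig -> U) :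
  mass_defined A m -> directed A (partial_sums A m).
Proof.
  intros Hm. split.
  - exists (pzero A). exists []. repeat split; [constructor | intros _ []].
  - intros x y [l [Nl [_ Fl]]] [l' [Nl' [_ Fl']]].
    destruct (dedup (l ++ l')) as [l0 [N0 I0]].
    destruct (partial_in Hm N0) as [S [HS PS]].
    exists S. split; auto. split.
    + destruct (fsum_sub Nl N0 (fun z Hz => I0 z (in_or_app _ _ _ (or_introl Hz))) HS) as [u [Hu Hp]].
      rewrite Fl in Hu. injection Hu as <-. auto.
    + destruct (fsum_sub Nl' N0 (fun z Hz => I0 z (in_or_app _ _ _ (or_intror Hz))) HS) as [u [Hu Hp]].
      rewrite Fl' in Hu. injection Hu as <-. auto.
Qed.

Lemma directed_img U (A : psemiring U) (D : U -> Prop) u :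
  directed A D -> directed A (fun w => exists x, D x /\ w = pmul A u x).
Proof.
  intros [[x0 H0] H]. split.
  - exists (pmul A u x0). eauto.
  - intros x y [x' [Hx ->]] [y' [Hy ->]].
    destruct (H x' y' Hx Hy) as [z [Hz [L1 L2]]].
    exists (pmul A u z). split; eauto. split; apply ple_mull; auto.
Qed.
Unset Implicit Arguments. Set Strict Implicit.

Theorem lemmaA7 (U : Type) (A : psemiring U)
  (HA_ord : naturally_ordered A) (HA_cont : scott_continuous A) (HA_top : has_top A)
  (Sig : Type) (e1 e2 : expr U Sig) :
  compatible A e1 e2 ->
  forall (s : Sig) (m1 m2 : Sig -> U), inW A m1 -> inW A m2 ->
    exists m : Sig -> U,
      (forall t : Sig,
          padd A (pmul A (expr_eval A e1 s) (m1 t)) (pmul A (expr_eval A e2 s) (m2 t))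
          = Some (m t)) /\
      inW A m.
Proof.
  intros Hcomp s m1 m2 [C1 Dm1] [C2 Dm2].
  destruct (Hcomp s) as [c Hc].
  set (a := expr_eval A e1 s) in *. set (b := expr_eval A e2 s) in *.
  clearbody a b.
  pose (m := fun t => match padd A (pmul A a (m1 t)) (pmul A b (m2 t)) with
                      | Some v => v | None => pzero A end).
  assert (Hm : forall t, padd A (pmul A a (m1 t)) (pmul A b (m2 t)) = Some (m t)).
  { intros t. unfold m. destruct (top_def HA_top (m1 t) (m2 t) Hc) as [z Hz].
    rewrite Hz. reflexivity. }
  exists m. split; [exact Hm|]. split.
  - destruct C1 as [g1 G1]. destruct C2 as [g2 G2].
    assert (Hs : forall t, supp A m t -> ~ supp A m1 t -> supp A m2 t).
    { intros t H1 H2 H3. apply H1. unfold supp in *. apply NNPP in H2.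
      pose proof (Hm t) as E. rewrite H2, H3, !pmul_0r, padd_0 in E.
      injection E as E. auto. }
    exists (fun t => if excluded_middle_informative (supp A m1 t) then 2 * g1 t
                     else 2 * g2 t + 1).
    intros x y Hx Hy.
    destruct (excluded_middle_informative (supp A m1 x));
    destruct (excluded_middle_informative (supp A m1 y)); intros E.
    + apply G1; auto. lia.
    + lia.
    + lia.
    + apply G2; auto. lia.
  - destruct Dm1 as [D1 [M1 S1]] eqn:EDm1. destruct Dm2 as [D2 [M2 S2]] eqn:EDm2.
    assert (Key : forall l, NoDup l -> exists T1 T2 W,
               partial_sums A m1 T1 /\ partial_sums A m2 T2 /\
               fsum A (map m1 l) = Some T1 /\ fsum A (map m2 l) = Some T2 /\
               padd A (pmul A a T1) (pmul A b T2) = Some W /\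
               fsum A (map m l) = Some W).
    { intros l Hl.
      destruct (partial_in Dm1 Hl) as [T1 [F1 P1]].
      destruct (partial_in Dm2 Hl) as [T2 [F2 P2]].
      destruct (top_def HA_top T1 T2 Hc) as [W HW].
      exists T1, T2, W. repeat split; auto.
      exact (fsum_add (f:=m) (g:=fun t => pmul A a (m1 t)) (h:=fun t => pmul A b (m2 t))
               Hm (fsum_scale a F1) (fsum_scale b F2) HW). }
    split.
    + intros l Hl _. destruct (Key l Hl) as [T1 [T2 [W [_ [_ [_ [_ [_ HW]]]]]]]]. eauto.
    + destruct (top_def HA_top M1 M2 Hc) as [M HM]. exists M. split.
      * intros v [l [Hl [_ Hv]]].
        destruct (Key l Hl) as [T1 [T2 [W [P1 [P2 [_ [_ [HW FW]]]]]]]].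
        rewrite Hv in FW. injection FW as <-.
        destruct (mono (ple_mull a (proj1 S1 _ P1)) (ple_mull b (proj1 S2 _ P2)) HM)
          as [z [Hz Lz]].
        rewrite HW in Hz. injection Hz as <-. exact Lz.
      * intros y Hy.
        assert (Claim : forall x1 x2, partial_sums A m1 x1 -> partial_sums A m2 x2 ->
                  exists z, padd A (pmul A a x1) (pmul A b x2) = Some z /\ ple A z y).
        { intros x1 x2 [l1 [N1 [_ F1]]] [l2 [N2 [_ F2]]].
          destruct (dedup (l1 ++ l2)) as [l0 [N0 I0]].
          destruct (Key l0 N0) as [T1 [T2 [W [_ [_ [FT1 [FT2 [HW FW]]]]]]]].
          destruct (fsum_sub N1 N0 (fun z Hz => I0 z (in_or_app _ _ _ (or_introl Hz))) FT1)
            as [u1 [Hu1 L1]].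
          rewrite F1 in Hu1. injection Hu1 as <-.
          destruct (fsum_sub N2 N0 (fun z Hz => I0 z (in_or_app _ _ _ (or_intror Hz))) FT2)
            as [u2 [Hu2 L2]].
          rewrite F2 in Hu2. injection Hu2 as <-.
          destruct (mono (ple_mull a L1) (ple_mull b L2) HW) as [z [Hz Lz]].
          exists z. split; auto. eapply ple_trans; [exact Lz|].
          apply Hy.
          destruct (fsum_filter A m N0) as [l' [N' [S' [_ F']]]].
          exists l'. repeat split; auto. rewrite F'. exact FW. }
        destruct HA_cont as [K1 [K2 _]].
        assert (Step1 : forall x1, partial_sums A m1 x1 ->
                  exists z, padd A (pmul A a x1) (pmul A b M2) = Some z /\ ple A z y).
        { intros x1 P1.
          destruct (top_def HA_top x1 M2 Hc) as [v Hv].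
          pose proof (K2 _ M2 b (directed_ps Dm2) S2) as Sb.
          pose proof (K1 _ _ _ _ (directed_img b (directed_ps Dm2)) Sb Hv) as Sv.
          exists v. split; auto. apply (proj2 Sv).
          intros w [x [[x2 [P2 ->]] Hw]].
          destruct (Claim x1 x2 P1 P2) as [z [Hz Lz]].
          rewrite Hw in Hz. injection Hz as <-. exact Lz. }
        pose proof (K2 _ M1 a (directed_ps Dm1) S1) as Sa.
        rewrite padd_comm in HM.
        pose proof (K1 _ _ _ _ (directed_img a (directed_ps Dm1)) Sa HM) as Sv.
        apply (proj2 Sv).
        intros w [x [[x1 [P1 ->]] Hw]].
        destruct (Step1 x1 P1) as [z [Hz Lz]].
        rewrite padd_comm, Hw in Hz. injection Hz as <-. exact Lz.
Qed.
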